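(* Let $H$ be an $r$-graph and $T$ a subgraph of $H$. Then for every $n$, $C_r(n,H)\ge C_r(n,T)^{\frac{1}{|V(H)|+1}}$.
   Context: An $r$-graph is an $r$-uniform hypergraph; $K_n^{(r)}$ is the complete $r$-graph on $n$ vertices. A copy of an $r$-graph $H$ in $K_n^{(r)}$ is a subhypergraph isomorphic to $H$ (its vertex set is the image of all of $V(H)$). An $(n,r,H)$-local coloring with $k$ colors is a family of edge-colorings $f_v:E(K_n^{(r)})\to[k]$, one per vertex $v$, such that for every copy $T$ of $H$ there is $u\in V(T)$ with $f_u$ injective on $E(T)$. $C_r(n,H)$ is the minimum such $k$. *)

(* Defs.v *)
From mathcomp Require Import all_boot all_order.
From mathcomp Require Import boolp.


Definition is_rgraph (r : nat) {V : finType} (VS : {set V}) (E : {set {set V}}) :=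
  forall e, e \in E -> e \subset VS /\ #|e| = r.

Definition is_subgraph {V : finType} (VT VH : {set V}) (ET EH : {set {set V}}) :=
  VT \subset VH /\ ET \subset EH.

(* An (n, r, H)-local colouring with k colours: one edge colouring
   f u : E(K_n^(r)) -> [k] per vertex u of K_n (edges of K_n^(r) are the
   r-subsets of 'I_n; values on other sets are irrelevant).  Copies of H are
   the images of H under maps phi injective on V(H): vertex set phi @: VH,
   edge set { phi @: e | e in EH }. *)
Definition local_coloring (r n k : nat) {V : finType} (VS : {set V})
    (E : {set {set V}}) (f : 'I_n -> {set 'I_n} -> nat) : Prop :=
  (forall (u : 'I_n) (e : {set 'I_n}), #|e| = r -> f u e < k) /\
  (forall phi : V -> 'I_n, {in VS &, injective phi} ->
     exists2 u, u \in phi @: VS &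
       {in (fun e : {set V} => phi @: e) @: E &, injective (f u)}).

Definition has_local_coloring (r n : nat) {V : finType} (VS : {set V})
    (E : {set {set V}}) (k : nat) : bool :=
  `[< exists f, local_coloring r n k VS E f >].

(* C_r(n, H): the least number of colours of an (n, r, H)-local colouring
   (0 as a junk value if none exists, which only happens when V(H) is empty). *)
Definition Cr (r n : nat) {V : finType} (VS : {set V}) (E : {set {set V}}) : nat :=
  match pselect (exists k, has_local_coloring r n VS E k) with
  | left h => ex_minn h
  | right _ => 0
  end.

(* Main.v *)
Require Import Defs.
From mathcomp Require Import all_boot all_order.
From mathcomp Require Import boolp zify.

Lemma enc_lt {k N} {a : nat -> nat} : (forall i, i < N -> a i < k) ->
  \sum_(i < N) a i * k ^ i < k ^ N.
Proof.
elim: N => [|N IH] H; first by rewrite big_ord0.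
rewrite big_ord_recr /= expnS.
have h1 := IH (fun i (hi : i < N) => H i (ltnW hi)).
have h2 : a N < k := H N (ltnSn N).
have : a N * k ^ N + k ^ N <= k * k ^ N by rewrite addnC -mulSn leq_mul2r h2 orbT.
move=> hh; apply: leq_trans hh; by rewrite addnC ltn_add2l.
Qed.

Lemma enc_inj k N (a b : nat -> nat) : (forall i, i < N -> a i < k) ->
  (forall i, i < N -> b i < k) ->
  \sum_(i < N) a i * k ^ i = \sum_(i < N) b i * k ^ i ->
  forall i, i < N -> a i = b i.
Proof.
elim: N => [|N IH] Ha Hb; first by [].
rewrite !big_ord_recr /= => E.
have Ha' := fun i (hi : i < N) => Ha i (ltnW hi).
have Hb' := fun i (hi : i < N) => Hb i (ltnW hi).
have la := enc_lt Ha'. have lb := enc_lt Hb'.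
have k0 : 0 < k := leq_ltn_trans (leq0n _) (Ha N (ltnSn N)).
have kpos : 0 < k ^ N by rewrite expn_gt0 k0.
set x1 := \sum_(i < N) _ in E la. set x2 := \sum_(i < N) _ in E lb.
have ex : x1 = x2.
  have := congr1 (modn^~ (k ^ N)) E.
  by rewrite addnC [x2 + _]addnC !modnMDl !modn_small.
move: E; rewrite ex => /addnI /eqP; rewrite eqn_pmul2r // => /eqP eN.
move=> i; rewrite ltnS leq_eqVlt => /orP [/eqP -> //|hi].
by apply: IH.
Qed.
Lemma extend (n m : nat) (V : finType) (VT VH : {set V}) (phi : V -> 'I_n) (d : 'I_n) :
  VT \subset VH -> #|VH| <= m -> m <= n -> {in VT &, injective phi} ->
  exists phi' : V -> 'I_n, [/\ {in VH &, injective phi'}, {in VT, phi' =1 phi} &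
    forall x, x \in VH -> x \notin VT -> (phi' x < m) && (phi' x \notin phi @: VT)].
Proof.
move=> sTH hm mn injphi.
set W := [set w : 'I_n | w < m].
set F := W :\: phi @: VT.
set A := VH :\: VT.
have cW : m <= #|W|.
  have -> : m = #|[set widen_ord mn i | i : 'I_m]|.
    by rewrite card_imset ?card_ord // => i j /(congr1 val) /= /val_inj.
  apply: subset_leq_card; apply/subsetP => w /imsetP [i _ ->].
  by rewrite inE /=.
have cF : #|A| <= #|F|.
  rewrite /A /F !cardsD (setIidPr sTH).
  have h1 := leq_imset_card phi VT.
  have h2 : #|W :&: phi @: VT| <= #|phi @: VT| by apply: subset_leq_card; apply: subsetIr.
  lia.
exists (fun x => if x \in VT then phi x else nth d (enum F) (index x (enum A))).
have key : forall x, x \in VH -> x \notin VT ->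
    index x (enum A) < size (enum F) /\ nth d (enum F) (index x (enum A)) \in F.
  move=> x xH xT.
  have xA : x \in A by rewrite inE xT xH.
  have hi : index x (enum A) < size (enum F).
    by rewrite -cardE; apply: leq_trans cF; rewrite cardE index_mem mem_enum.
  by split => //; rewrite -mem_enum mem_nth.
split.
- move=> x y xH yH /=.
  case: ifP => xT; case: ifP => yT.
  + by apply: injphi.
  + move=> e; have [_] := key y yH (negbT yT).
    by rewrite -e inE imset_f.
  + move=> e; have [_] := key x xH (negbT xT).
    by rewrite e inE imset_f.
  + have [h1 _] := key x xH (negbT xT); have [h2 _] := key y yH (negbT yT).
    move/eqP; rewrite nth_uniq ?enum_uniq // => /eqP e.
    have xA : x \in enum A by rewrite mem_enum inE xT xH.
    have yA : y \in enum A by rewrite mem_enum inE yT yH.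
    by rewrite -(nth_index x xA) e nth_index.
- by move=> x /= ->.
- move=> x xH xT /=; rewrite (negbTE xT).
  have [_] := key x xH xT.
  by rewrite !inE => /andP [-> ->].
Qed.

Theorem theorem12 (r n : nat) (V : finType) (VH VT : {set V})
    (EH ET : {set {set V}}) :
  is_rgraph r VH EH -> is_rgraph r VT ET -> is_subgraph VT VH ET EH ->
  VT != set0 -> #|VH| <= n ->
  Cr r n VT ET <= Cr r n VH EH ^ (#|VH|.+1).
Proof.
move=> rH rT [sTH sE] VT0 hn.
have [x0 x0T] := set0Pn _ VT0.
have ex : exists k, has_local_coloring r n VH EH k.
  exists #|{set 'I_n}|; apply/asboolP; exists (fun _ e => val (enum_rank e)); split.
  - move=> u e _; exact: ltn_ord.
  - move=> phi _; exists (phi x0); first by apply: imset_f; apply: (subsetP sTH).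
    by move=> e1 e2 _ _ /val_inj /enum_rank_inj.
set k := Cr r n VH EH.
have [f [fb fi]] : exists f, local_coloring r n k VH EH f.
  rewrite /k /Cr; case: pselect => [h|/(_ ex) //].
  by case: (ex_minnP h) => kk /asboolP hk _.
suff hT : has_local_coloring r n VT ET (k ^ #|VH|.+1).
  rewrite /Cr; case: pselect => [h|//]; case: (ex_minnP h) => kk _ hmin. exact: hmin.
apply/asboolP.
set m := #|VH|.
pose c (v : 'I_n) (i : nat) : 'I_n := if i is j.+1 then insubd v j else v.
exists (fun v e => \sum_(i < m.+1) f (c v i) e * k ^ i). split.
- move=> u e he; apply: (@enc_lt k m.+1 (fun i => f (c u i) e)) => i _; exact: fb.
- move=> phi injphi.
  have [phi' [inj' agree out]] := @extend n m V VT VH phi (phi x0) sTH (leqnn _) hn injphi.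
  have [u0 u0in u0inj] := fi phi' inj'.
  have imE : forall a, a \in ET -> phi' @: a = phi @: a.
    move=> a aT; apply: eq_in_imset => x xa; apply: agree.
    have [sa _] := rT a aT; exact: (subsetP sa).
  pose v := if u0 \in phi @: VT then u0 else phi x0.
  exists v; first by rewrite /v; case: ifP => // _; exact: imset_f.
  have [i [im ci]] : exists i, i < m.+1 /\ c v i = u0.
    rewrite /v; case: ifP => h; first by exists 0.
    case/imsetP: u0in => x xH ex'.
    have xT : x \notin VT.
      by apply/negP => xT; rewrite ex' agree // imset_f in h.
    have /andP [lt _] := out x xH xT.
    exists (val u0).+1; split; first by rewrite ex'.
    by apply: val_inj; rewrite /c val_insubd /= ltn_ord.
  have card_r : forall a, a \in ET -> #|phi @: a| = r.
    move=> a aT; have [sa ca] := rT a aT; rewrite card_in_imset //.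
    by move=> x y xa ya; apply: injphi; apply: (subsetP sa).
  move=> e1 e2 he1 he2.
  case/imsetP: he1 => a1 a1T ->; case/imsetP: he2 => a2 a2T -> E.
  have dig := @enc_inj k m.+1 (fun j => f (c v j) (phi @: a1))
     (fun j => f (c v j) (phi @: a2))
     (fun j _ => fb _ _ (card_r a1 a1T)) (fun j _ => fb _ _ (card_r a2 a2T)) E i im.
  rewrite /= ci in dig.
  apply: u0inj dig.
  + by rewrite -imE //; apply: imset_f; exact: (subsetP sE).
  + by rewrite -imE //; apply: imset_f; exact: (subsetP sE).
Qed.
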